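(* Let $G$ be a connected graph in $\mathcal{C}$ and $C$ an induced $C_5$ in $G$ with vertices $0,\dots,4$ in cyclic order. Then for every $i$ (indices mod 5), there is no edge between $X_i$ and $Y_{i+1}\cup Y_{i+2}\cup Y_{i+4}$.
   Context: $\mathcal{C}=\mathrm{Free}(\text{claw}, 4K_1, \text{5-wheel}, C_5\text{-twin}, P_5\text{-twin}, K_5-e)$, where $\mathrm{Free}(L)$ is the class of graphs with no induced subgraph isomorphic to a member of $L$; the claw is $K_{1,3}$; $4K_1$ is the edgeless graph on 4 vertices; the 5-wheel is $C_5$ plus a vertex adjacent to all five cycle vertices; the $C_5$-twin is $C_5$ plus a new vertex adjacent to one cycle vertex $v$ and both cycle-neighbours of $v$; the $P_5$-twin is a path $p_1p_2p_3p_4p_5$ plus a new vertex adjacent to exactly $p_2,p_3,p_4$; $K_5-e$ is $K_5$ minus one edge. Given an induced cycle $C$ of length 5 with vertices $0,\dots,4$ in cyclic order (indices taken mod 5): $R$ is the set of vertices outside $C$ with no neighbour in $C$; $X_j$ is the set of vertices outside $C$ whose neighbourhood in $C$ is exactly $\{j,j+1\}$; $Y_j$ is the set of vertices outside $C$ whose neighbourhood in $C$ is exactly $\{j,j+1,j+2,j+3\}$; $X=\bigcup_j X_j$, $Y=\bigcup_j Y_j$. *)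

(* Defs.v *)
From mathcomp Require Import all_boot.
Set Implicit Arguments. Unset Strict Implicit. Unset Printing Implicit Defensive.

Definition simple_graph (T : finType) (e : rel T) : Prop :=
  symmetric e /\ irreflexive e.

Definition connected_graph (T : finType) (e : rel T) : Prop :=
  forall x y : T, connect e x y.

Definition graph_of (n : nat) (es : seq (nat * nat)) : rel 'I_n :=
  fun a b => ((val a, val b) \in es) || ((val b, val a) \in es).
Arguments graph_of : clear implicits.

Definition induces (T : finType) (e : rel T) (n : nat) (h : rel 'I_n) : Prop :=
  exists f : 'I_n -> T, injective f /\ forall a b, e (f a) (f b) = h a b.

Definition claw := graph_of 4 [:: (0,1); (0,2); (0,3)].
Definition K1_4 := graph_of 4 [::].
Definition wheel5 := graph_of 6
  [:: (0,1); (1,2); (2,3); (3,4); (4,0); (5,0); (5,1); (5,2); (5,3); (5,4)].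
(* C5 plus a vertex adjacent to v = 0 and its two cycle-neighbours 1, 4 *)
Definition C5_twin := graph_of 6
  [:: (0,1); (1,2); (2,3); (3,4); (4,0); (5,0); (5,1); (5,4)].
(* path 0-1-2-3-4 plus a vertex adjacent to exactly 1,2,3 *)
Definition P5_twin := graph_of 6
  [:: (0,1); (1,2); (2,3); (3,4); (5,1); (5,2); (5,3)].
Definition K5_minus_e := graph_of 5
  [:: (0,2); (0,3); (0,4); (1,2); (1,3); (1,4); (2,3); (2,4); (3,4)].

Definition in_class (T : finType) (e : rel T) : Prop :=
  ~ induces e claw /\ ~ induces e K1_4 /\ ~ induces e wheel5 /\
  ~ induces e C5_twin /\ ~ induces e P5_twin /\ ~ induces e K5_minus_e.

Definition addI5 (i : 'I_5) (k : nat) : 'I_5 := inord ((val i + k) %% 5).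

Definition induced_C5 (T : finType) (e : rel T) (c : 'I_5 -> T) : Prop :=
  injective c /\
  forall i j : 'I_5, e (c i) (c j) = (j == addI5 i 1) || (i == addI5 j 1).

Definition outside (T : finType) (c : 'I_5 -> T) (v : T) : Prop :=
  forall k : 'I_5, v != c k.

Definition inX (T : finType) (e : rel T) (c : 'I_5 -> T) (j : 'I_5) (v : T) : Prop :=
  outside c v /\ forall k : 'I_5, e v (c k) = (k == j) || (k == addI5 j 1).

Definition inY (T : finType) (e : rel T) (c : 'I_5 -> T) (j : 'I_5) (v : T) : Prop :=
  outside c v /\
  forall k : 'I_5, e v (c k) =
    [|| k == j, k == addI5 j 1, k == addI5 j 2 | k == addI5 j 3].

(* Main.v *)
Require Import Defs.
From mathcomp Require Import all_boot.
Lemma claw_from (T : finType) (e : rel T) (y x a b : T) :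
  symmetric e -> irreflexive e ->
  e y x -> e y a -> e y b -> ~~ e x a -> ~~ e x b -> ~~ e a b ->
  x != y -> a != y -> b != y -> a != x -> b != x -> a != b ->
  induces e claw.
Proof.
move=> sy ir yx ya yb xa xb ab n1 n2 n3 n4 n5 n6.
pose f := fun k : 'I_4 => match val k with 0 => y | 1 => x | 2 => a | _ => b end.
exists f; split.
  move=> [[|[|[|[|?]]]] H1] [[|[|[|[|?]]]] H2] //; rewrite /f /= => E; apply/val_inj => /=.
  all: try by [].
  all: try by rewrite E eqxx in n1 n2 n3 n4 n5 n6.
  all: try by rewrite -E eqxx in n1 n2 n3 n4 n5 n6.
have ny y' x' : ~~ e y' x' -> e x' y' = false.
  by move=> H; rewrite sy; apply/negbTE.
move=> [[|[|[|[|?]]]] H1] [[|[|[|[|?]]]] H2] //; rewrite /f /=.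
all: rewrite ?ir.
all: try (rewrite (negbTE xa) || rewrite (negbTE xb) || rewrite (negbTE ab) || rewrite (ny _ _ xa) || rewrite (ny _ _ xb) || rewrite (ny _ _ ab)).
all: try (rewrite yx || rewrite ya || rewrite yb || rewrite (sy _ y) ?yx ?ya ?yb).
all: by [].
Qed.

Lemma addI5E (i : 'I_5) k : val (addI5 i k) = (val i + k) %% 5.
Proof. by rewrite /addI5 /= inordK // ltn_mod. Qed.

Ltac fin5 i := rewrite -?val_eqE ?addI5E; case: i => [[|[|[|[|[|?]]]]] Hi] //=.

Theorem claim8 (T : finType) (e : rel T) (c : 'I_5 -> T) :
  simple_graph e -> connected_graph e -> in_class e -> induced_C5 e c ->
  forall (i : 'I_5) (x y : T),
    inX e c i x ->
    inY e c (addI5 i 1) y \/ inY e c (addI5 i 2) y \/ inY e c (addI5 i 4) y ->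
    ~~ e x y.
Proof.
move=> [sy ir] _ [Hclaw _] [ci ce] i x y [xo Hx] Hy.
apply/negP => exy; apply: Hclaw.
have [yo [Hy2 Hy4]] : outside c y /\ e y (c (addI5 i 2)) /\ e y (c (addI5 i 4)).
  case: Hy => [|[]] [yo Hy]; split => //; split; rewrite Hy; clear Hy Hx; fin5 i.
have na : forall j k : 'I_5, j != k -> c j != c k.
  by move=> j k; apply: contra => /eqP /ci ->.
apply: (@claw_from _ e y x (c (addI5 i 2)) (c (addI5 i 4))) => //.
- by rewrite sy.
- rewrite Hx; clear Hx Hy Hy2 Hy4; fin5 i.
- rewrite Hx; clear Hx Hy Hy2 Hy4; fin5 i.
- rewrite ce; clear Hx Hy Hy2 Hy4; fin5 i.
- by apply/eqP => E; rewrite E ir in exy.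
- by rewrite eq_sym.
- by rewrite eq_sym.
- by rewrite eq_sym.
- by rewrite eq_sym.
- apply: na; clear Hx Hy Hy2 Hy4; fin5 i.
Qed.
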